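(* Let $n,b$ be integers with $1<n<b$, let $p=(d_k,\ldots,d_0)_b=n\cdot(d_{\sigma(k)},\ldots,d_{\sigma(0)})_b$ be an $(n,b,\sigma)$-permutiple with carries $c_k,\ldots,c_1,c_0=0$, and let $S=\bigl((c_0,c_1),\ldots,(c_{k-1},c_k),(c_k,c_0)\bigr)$ be its state-transition sequence. Let $\varphi$ be a symmetry of $p$ which fixes $S$, and let $\psi$ be the $(k+1)$-cycle $(0,1,\ldots,k)$. (a) If $0\le j\le k$ and $c_j=0$ (so that $p_{\psi^j}$ is a rotational sibling of $p$), then $\varphi\psi^j$ is also a symmetry of $p$; in particular $(d_{\varphi\psi^j(k)},\ldots,d_{\varphi\psi^j(0)})_b=n\cdot(d_{\sigma\varphi\psi^j(k)},\ldots,d_{\sigma\varphi\psi^j(0)})_b$ is an $(n,b,\psi^{-j}\varphi^{-1}\sigma\varphi\psi^j)$-permutiple. (b) If $0<j\le k$ and $c_j=n-1$ (so that $\overline{p}_{\psi^j}$ is a reflective sibling of $p$), then $(\overline{d}_{\varphi\psi^j(k)},\ldots,\overline{d}_{\varphi\psi^j(0)})_b=n\cdot(\overline{d}_{\sigma\varphi\psi^j(k)},\ldots,\overline{d}_{\sigma\varphi\psi^j(0)})_b$, i.e. this number is an $(n,b,\psi^{-j}\varphi^{-1}\sigma\varphi\psi^j)$-permutiple.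
   Context: For digits $0\le e_i<b$, $(e_k,\ldots,e_0)_b=\sum_ie_ib^i$ (leading zero digits allowed). For a permutation $\tau$ of $\{0,\ldots,k\}$, $(e_k,\ldots,e_0)_b$ is an $(n,b,\tau)$-permutiple if $(e_k,\ldots,e_0)_b=n\cdot(e_{\tau(k)},\ldots,e_{\tau(0)})_b$. The carries of $p$ are $c_0=0$, $c_{i+1}=\lfloor (nd_{\sigma(i)}+c_i)/b\rfloor$ for $0\le i\le k$ (so $c_{k+1}=0$ and $n d_{\sigma(i)}-d_i+c_i=bc_{i+1}$). The permutiple string of $p$ is $s=(d_0,d_{\sigma(0)})\cdots(d_k,d_{\sigma(k)})$. A permutation $\varphi$ of $\{0,\ldots,k\}$ is a symmetry of $p$ if $(d_{\varphi(k)},\ldots,d_{\varphi(0)})_b=n\cdot(d_{\sigma\varphi(k)},\ldots,d_{\sigma\varphi(0)})_b$ (reordering the inputs of $s$ by $\varphi$ yields another permutiple string). A symmetry $\varphi$ fixes $S$ if $S_\varphi=S$, where $S_\varphi=\bigl((c_{\varphi(0)},c_{\varphi(1)}),\ldots,(c_{\varphi(k-1)},c_{\varphi(k)}),(c_{\varphi(k)},c_{\varphi(0)})\bigr)$ is the state-transition (carry) sequence of the reordered string. $\psi(i)=i+1$ for $i<k$, $\psi(k)=0$. For a digit $d$, $\overline d=b-1-d$. The rotational sibling $p_{\psi^j}$ (for $c_j=0$) is $(d_{\psi^j(k)},\ldots,d_{\psi^j(0)})_b=n\cdot(d_{\sigma\psi^j(k)},\ldots,d_{\sigma\psi^j(0)})_b$,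 and the reflective sibling $\overline{p}_{\psi^j}$ (for $c_j=n-1$) is $(\overline d_{\psi^j(k)},\ldots,\overline d_{\psi^j(0)})_b=n\cdot(\overline d_{\sigma\psi^j(k)},\ldots,\overline d_{\sigma\psi^j(0)})_b$. *)

(* Defs.v *)
From mathcomp Require Import all_boot all_fingroup.
Set Implicit Arguments. Unset Strict Implicit. Unset Printing Implicit Defensive.
Local Open Scope nat_scope.

Section Permutiples.
Variable k : nat.
Notation I := 'I_k.+1.

Definition bval (b : nat) (e : I -> nat) : nat := \sum_(i < k.+1) e i * b ^ i.

Definition is_permutiple (n b : nat) (e : I -> nat) (tau : {perm I}) : Prop :=
  (forall i, e i < b) /\ bval b e = n * bval b (fun i => e (tau i)).

Fixpoint carry (n b : nat) (d : I -> nat) (sigma : {perm I}) (i : nat) : nat :=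
  match i with
  | 0 => 0
  | i'.+1 => (n * d (sigma (inord i')) + carry n b d sigma i') %/ b
  end.

(* psi(i) = i+1 for i<k, psi(k) = 0 : the (k+1)-cycle (0,1,...,k) *)
Definition psi : {perm I} := perm (@ordS_inj k.+1).

Definition state_seq (n b : nat) (d : I -> nat) (sigma phi : {perm I})
  : seq (nat * nat) :=
  [seq (carry n b d sigma (phi i), carry n b d sigma (phi (psi i))) | i <- enum I].

Definition is_symmetry (n b : nat) (d : I -> nat) (sigma phi : {perm I}) : Prop :=
  bval b (fun i => d (phi i)) = n * bval b (fun i => d (sigma (phi i))).

Definition fixes_S (n b : nat) (d : I -> nat) (sigma phi : {perm I}) : Prop :=
  state_seq n b d sigma phi = state_seq n b d sigma 1%g.

Definition dbar (b x : nat) : nat := b - 1 - x.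

End Permutiples.

(* Main.v *)
Require Import Defs.
From mathcomp Require Import all_boot all_fingroup zify.
Local Open Scope nat_scope.

Lemma uniq2 b x y A B : x < b -> y < b -> x + b*A = y + b*B -> x = y /\ A = B.
Proof.
move=> hx hy e.
have hAB : A = B.
  case: (ltngtP A B) => // h.
  - have : b * A.+1 <= b * B by rewrite leq_mul2l h orbT. nia.
  - have : b * B.+1 <= b * A by rewrite leq_mul2l h orbT. nia.
subst; split=>//; lia.
Qed.

Arguments uniq2 {b x y A B}.
Lemma compl n b F E G G' : F < b -> E < b -> G < n -> G' < n ->
  n * F + G = E + b * G' -> n * (b-1-F) + (n-1-G) = (b-1-E) + b*(n-1-G').
Proof. move=> *. nia. Qed.

Definition H k b (E : nat -> nat) m := \sum_(0 <= i < k.+1 - m) E (m + i) * b ^ i.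

Lemma H_step k b E m : m <= k -> H k b E m = E m + b * H k b E m.+1.
Proof.
move=> hm; rewrite /H subSn // big_nat_recl // addn0 expn0 muln1 subSS.
congr (_ + _); rewrite big_distrr /=; apply: eq_bigr => i _.
by rewrite addnS -addSn expnS mulnCA.
Qed.

Lemma H_end k b E : H k b E k.+1 = 0.
Proof. by rewrite /H subnn big_geq. Qed.

Lemma bval_H k b (e : 'I_k.+1 -> nat) (E : nat -> nat) : (forall i : 'I_k.+1, e i = E i) ->
  bval b e = H k b E 0.
Proof.
move=> he; rewrite /H /bval subn0 big_mkord; apply: eq_bigr => i _.
by rewrite add0n he.
Qed.

Definition col k n b (E F g : nat -> nat) :=
  g 0 = 0 /\ g k.+1 = 0 /\ forall m, m <= k -> n * F m + g m = E m + b * g m.+1.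

Lemma L2 k n b E F g : col k n b E F g -> H k b E 0 = n * H k b F 0.
Proof.
case=> g0 [gk hc].
have key : forall t, t <= k.+1 ->
  H k b E (k.+1 - t) = g (k.+1 - t) + n * H k b F (k.+1 - t).
  elim=> [|t IH] ht; first by rewrite subn0 !H_end gk muln0.
  have hm : k.+1 - t.+1 <= k by lia.
  have e1 : (k.+1 - t.+1).+1 = k.+1 - t by lia.
  rewrite (H_step _ _ E _ hm) (H_step _ _ F _ hm) e1 IH ?(ltnW ht) //.
  have := hc _ hm; rewrite e1 => h. nia.
by have := key k.+1 (leqnn _); rewrite subnn g0.
Qed.

Fixpoint cr n b (F : nat -> nat) i :=
  match i with 0 => 0 | i'.+1 => (n * F i' + cr n b F i') %/ b end.

Lemma L1 k n b E F : 0 < b -> (forall m, m <= k -> E m < b) ->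
  H k b E 0 = n * H k b F 0 -> col k n b E F (cr n b F).
Proof.
move=> b0 hE h0.
have inv : forall m, m <= k.+1 -> H k b E m = cr n b F m + n * H k b F m.
  elim=> [|m IH] hm //.
  have hm' : m <= k by lia.
  have := IH (ltnW hm); rewrite (H_step _ _ E _ hm') (H_step _ _ F _ hm') /= => e.
  have e2 : E m + b * H k b E m.+1 =
     (n * F m + cr n b F m) %% b + b * ((n * F m + cr n b F m) %/ b + n * H k b F m.+1).
    have hd := divn_eq (n * F m + cr n b F m) b. nia.
  have [_ ->] := uniq2 (hE _ hm') (ltn_pmod _ b0) e2. by [].
split=> //; split.
  by have := inv _ (leqnn _); rewrite H_end; lia.
move=> m hm.
have := inv _ (leqW hm); have := inv m.+1 (hm : m < k.+1).
rewrite (H_step _ _ E _ hm) (H_step _ _ F _ hm) => e1 e2. nia.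
Qed.

Lemma col_bound k n b E F g : 0 < n -> (forall m, m <= k -> E m < b) ->
  (forall m, m <= k -> F m < b) -> col k n b E F g -> forall m, m <= k.+1 -> g m < n.
Proof.
move=> n0 hE hF [g0 [_ hc]]; elim=> [|m IH] hm; first by rewrite g0.
have hm' : m <= k by lia.
have := hc _ hm'; have := IH (ltnW hm); have := hF _ hm'; have := hE _ hm'.
move=> *. nia.
Qed.

Lemma modS_mod x d : (x %% d).+1 %% d = x.+1 %% d.
Proof. by rewrite -(addn1 (x %% d)) modnDml addn1. Qed.

Definition cyc k n b (E F G : nat -> nat) :=
  forall q, q <= k -> n * F q + G q = E q + b * G (q.+1 %% k.+1).

Lemma rot k n b E F G j : cyc k n b E F G -> j <= k -> G j = 0 ->
  col k n b (fun m => E ((m + j) %% k.+1)) (fun m => F ((m + j) %% k.+1))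
    (fun m => if m == k.+1 then 0 else G ((m + j) %% k.+1)).
Proof.
move=> hc hj gj; split; first by rewrite add0n modn_small.
split; first by rewrite eqxx.
move=> m hm /=.
have -> : (m == k.+1) = false by apply/eqP; lia.
rewrite hc //=.
rewrite modS_mod.
case: (ltngtP m k) => hmk; [|lia|].
  have -> : (m.+1 == k.+1) = false by apply/eqP; lia.
  by rewrite addSn.
subst m; by rewrite eqxx -addSn (addnC k.+1 j) modnDr (modn_small (hj : j < k.+1)) gj.
by rewrite -ltnS ltn_pmod.
Qed.

Lemma cyc_compl k n b E F G : (forall m, m <= k -> E m < b) ->
  (forall m, m <= k -> F m < b) -> (forall m, m <= k -> G m < n) ->
  cyc k n b E F G ->
  cyc k n b (fun m => b - 1 - E m) (fun m => b - 1 - F m) (fun m => n - 1 - G m).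
Proof.
move=> hE hF hG hc q hq; apply: compl; auto.
apply: hG; rewrite -ltnS; exact: ltn_pmod.
Qed.

Lemma psiX k j (i : 'I_k.+1) : val ((psi k ^+ j)%g i) = (i + j) %% k.+1.
Proof.
rewrite permX; elim: j => [|j IH] /=; first by rewrite addn0 modn_small.
rewrite /psi permE /= IH modS_mod addnS //.
Qed.
Arguments col_bound {k n b E F g}.
Arguments rot {k n b E F G j}.
Arguments cyc_compl {k n b E F G}.
Arguments L2 {k n b E F g}.

Theorem theorem26 (n b k : nat) (d : 'I_k.+1 -> nat) (sigma phi : {perm 'I_k.+1}) :
  1 < n -> n < b ->
  is_permutiple n b d sigma ->
  is_symmetry n b d sigma phi ->
  fixes_S n b d sigma phi ->
  (forall j : 'I_k.+1, carry n b d sigma j = 0 ->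
     is_symmetry n b d sigma (psi k ^+ j * phi)%g /\
     is_permutiple n b (fun i => d (phi ((psi k ^+ j)%g i)))
       (psi k ^+ j * phi * sigma * phi^-1 * psi k ^- j)%g) /\
  (forall j : 'I_k.+1, 0 < j -> carry n b d sigma j = n - 1 ->
     is_permutiple n b (fun i => dbar b (d (phi ((psi k ^+ j)%g i))))
       (psi k ^+ j * phi * sigma * phi^-1 * psi k ^- j)%g).
Proof.
move=> hn hnb [hd hp] hsym hfix.
have b0 : 0 < b by lia.
pose E := fun m => d (inord m).
pose F := fun m => d (sigma (inord m)).
pose E' := fun m => d (phi (inord m)).
pose F' := fun m => d (sigma (phi (inord m))).
pose g := cr n b F.
pose g' := cr n b F'.
have hcar : forall m, carry n b d sigma m = g m.
  by elim=> [|m IH] //=; rewrite IH.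
have hE : forall m, m <= k -> E m < b by move=> m _; exact: hd.
have hF : forall m, m <= k -> F m < b by move=> m _; exact: hd.
have hE' : forall m, m <= k -> E' m < b by move=> m _; exact: hd.
have hF' : forall m, m <= k -> F' m < b by move=> m _; exact: hd.
have hcol : col k n b E F g.
  apply: L1 => //.
  rewrite -(bval_H _ _ d _); last by move=> i; rewrite /E inord_val.
  rewrite -(bval_H _ _ (fun i => d (sigma i)) _) //.
  by move=> i; rewrite /F inord_val.
have hcol' : col k n b E' F' g'.
  apply: L1 => //.
  rewrite -(bval_H _ _ (fun i => d (phi i)) _); last by move=> i; rewrite /E' inord_val.
  rewrite -(bval_H _ _ (fun i => d (sigma (phi i))) _) //.
  by move=> i; rewrite /F' inord_val.
have hfi : forall i : 'I_k.+1, g (phi i) = g i.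
  move/eq_in_map: hfix => hf i.
  have := hf i (mem_enum _ _); rewrite perm1 => -[h1 _].
  by rewrite -!hcar.
have gb : forall m, m <= k.+1 -> g m < n := col_bound (ltnW hn) hE hF hcol.
have gb' : forall m, m <= k.+1 -> g' m < n := col_bound (ltnW hn) hE' hF' hcol'.
have geq : forall m, m <= k.+1 -> g' m = g m.
  move=> m hm; case: (ltngtP m k.+1) => hmk; last first.
  - by subst m; case: hcol => _ [-> _]; case: hcol' => _ [-> _].
  - lia.
  have hmk' : m <= k by [].
  set p := val (phi (inord m)).
  have hp' : p <= k by rewrite -ltnS /p ltn_ord.
  case: hcol => _ [_ hc]; case: hcol' => _ [_ hc'].
  have e1 := hc _ hp'; have e2 := hc' _ hmk'.
  have eF : F p = F' m by rewrite /F /F' /p inord_val.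
  have eE : E p = E' m by rewrite /E /E' /p inord_val.
  have e3 : g' m + b * g p.+1 = g p + b * g' m.+1 by lia.
  have [-> _] := uniq2 (leq_trans (gb' _ (leqW hmk')) (ltnW hnb))
                       (leq_trans (gb _ (leqW hp')) (ltnW hnb)) e3.
  by rewrite /p hfi inordK.
have hcyc : cyc k n b E' F' g.
  move=> q hq; case: hcol' => _ [_ hc'].
  have := hc' _ hq; rewrite !geq ?ltnS ?(leqW hq) // => ->.
  case: (ltngtP q k) => hqk; [|lia|].
  - by rewrite modn_small.
  - by subst q; rewrite modnn; case: hcol => -> [-> _].
have gbk : forall m, m <= k -> g m < n by move=> m hm; apply: gb; exact: leqW.
have rotI : forall (j i : 'I_k.+1), (psi k ^+ j)%g i = inord ((i + j) %% k.+1).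
  by move=> j i; apply: val_inj; rewrite psiX /= inordK // ltn_pmod.
have tauE : forall (j i : 'I_k.+1) (f : nat -> nat),
   f (d (phi ((psi k ^+ j)%g ((psi k ^+ j * phi * sigma * phi^-1 * psi k ^- j)%g i))))
   = f (d (sigma (phi ((psi k ^+ j)%g i)))).
  by move=> j i f; rewrite !permM !permKV.
split.
- move=> j hj; rewrite hcar in hj.
  have hc2 := rot hcyc (ltn_ord j : (j:nat) <= k) hj.
  have hh := L2 hc2.
  have hs : is_symmetry n b d sigma (psi k ^+ j * phi)%g.
    rewrite /is_symmetry (bval_H _ _ _ (fun m => E' ((m + j) %% k.+1))); last first.
      by move=> i; rewrite permM rotI.
    rewrite (bval_H _ _ _ (fun m => F' ((m + j) %% k.+1))) //.
    by move=> i; rewrite permM rotI.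
  have hs' : bval b (fun i => d (phi ((psi k ^+ j)%g i))) =
      n * bval b (fun i => d (sigma (phi ((psi k ^+ j)%g i)))).
    rewrite (bval_H _ _ _ (fun m => E' ((m + j) %% k.+1))); last first.
      by move=> i; rewrite rotI.
    rewrite (bval_H _ _ _ (fun m => F' ((m + j) %% k.+1))) //.
    by move=> i; rewrite rotI.
  split=> //; split; first by move=> i; exact: hd.
  rewrite hs'; congr (_ * _).
  apply: eq_bigr => i _; congr (_ * _).
  by rewrite !permM !permKV.
- move=> j j0 hj; rewrite hcar in hj.
  have hcc := cyc_compl hE' hF' gbk hcyc.
  have hc2 := rot hcc (ltn_ord j : (j:nat) <= k) (etrans (congr1 (fun x => n - 1 - x) hj) (subnn _)).
  have hh := L2 hc2.
  split; first by move=> i; rewrite /dbar; lia.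
  rewrite (bval_H _ _ _ (fun m => b - 1 - E' ((m + j) %% k.+1))); last first.
    by move=> i; rewrite rotI.
  rewrite (bval_H _ _ _ (fun m => b - 1 - F' ((m + j) %% k.+1))) //.
  move=> i; rewrite (tauE j i (dbar b)) rotI //.
Qed.
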